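(* Let $a,b\in\mathbb{R}\setminus\{0\}$. The assignment $k\mapsto aK+bL$, $k^{-1}\mapsto a^{-1}\overline{K}+b^{-1}\overline{L}$ extends to a unital algebra homomorphism $\Phi^{(a,b)}_{\mathcal{H}}:\mathcal{H}_0\to\mathcal{H}$, and this homomorphism is injective.
   Context: $\mathcal{H}_0=\mathcal{H}_0(\mathbf{1},k,k^{-1})$ is the unital $\mathbb{C}$-algebra generated by $k,k^{-1}$ with relations $kk^{-1}=k^{-1}k=\mathbf{1}$ (the Laurent polynomial algebra in $k$). $\mathcal{H}=\mathcal{H}(\mathbf{1},K,\overline{K},L,\overline{L})$ denotes the unital associative $\mathbb{C}$-algebra generated by $K,\overline{K},L,\overline{L}$ subject to the relations $K\overline{K}K=K$, $\overline{K}K\overline{K}=\overline{K}$, $K\overline{K}=\overline{K}K$, $L\overline{L}L=L$, $\overline{L}L\overline{L}=\overline{L}$, $L\overline{L}=\overline{L}L$, and $P+Q=\mathbf{1}$, where $P:=K\overline{K}$ and $Q:=L\overline{L}$. *)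

(* Defs.v *)
From HB Require Import structures.
From mathcomp Require Import all_boot all_order all_algebra.
Set Implicit Arguments. Unset Strict Implicit. Unset Printing Implicit Defensive.
Import Order.TTheory GRing.Theory Num.Theory.
Local Open Scope ring_scope.

Definition is_alg_hom (F : numClosedFieldType) (A B : algType F) (f : A -> B) : Prop :=
  [/\ forall x y, f (x + y) = f x + f y,
      forall (c : F) x, f (c *: x) = c *: f x,
      forall x y, f (x * y) = f x * f y &
      f 1 = 1].

Definition H0_rels (F : numClosedFieldType) (B : algType F) (k ki : B) : Prop :=
  k * ki = 1 /\ ki * k = 1.

(* (H0, k, ki) is THE unital algebra presented by generators k, k^{-1} and
   relations k k^{-1} = k^{-1} k = 1 (universal property of a presentation). *)
Definition is_H0_presentation (F : numClosedFieldType) (H0 : algType F) (k ki : H0) : Prop :=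
  H0_rels k ki /\
  forall (B : algType F) (k' ki' : B), H0_rels k' ki' ->
    (exists f : H0 -> B, is_alg_hom f /\ f k = k' /\ f ki = ki') /\
    (forall f g : H0 -> B, is_alg_hom f -> is_alg_hom g ->
        f k = g k -> f ki = g ki -> forall x, f x = g x).

Definition H_rels (F : numClosedFieldType) (B : algType F) (K Kb L Lb : B) : Prop :=
  [/\ K * Kb * K = K, Kb * K * Kb = Kb & K * Kb = Kb * K] /\
  [/\ L * Lb * L = L, Lb * L * Lb = Lb & L * Lb = Lb * L] /\
  K * Kb + L * Lb = 1.

Definition is_H_presentation (F : numClosedFieldType) (H : algType F) (K Kb L Lb : H) : Prop :=
  H_rels K Kb L Lb /\
  forall (B : algType F) (K' Kb' L' Lb' : B), H_rels K' Kb' L' Lb' ->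
    (exists f : H -> B, is_alg_hom f /\ f K = K' /\ f Kb = Kb' /\ f L = L' /\ f Lb = Lb') /\
    (forall f g : H -> B, is_alg_hom f -> is_alg_hom g ->
        f K = g K -> f Kb = g Kb -> f L = g L -> f Lb = g Lb -> forall x, f x = g x).

(* Main.v *)
Require Import Defs.
From HB Require Import structures.
From mathcomp Require Import all_boot all_order all_algebra.
Import Order.TTheory GRing.Theory Num.Theory.
Local Open Scope ring_scope.

Lemma alg_hom_comp (F : numClosedFieldType) (A B C : algType F) (f : A -> B) (g : B -> C) :
  is_alg_hom f -> is_alg_hom g -> is_alg_hom (g \o f).
Proof.
move=> [f1 f2 f3 f4] [g1 g2 g3 g4]; split=> /=.
- by move=> x y; rewrite f1 g1.
- by move=> c x; rewrite f2 g2.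
- by move=> x y; rewrite f3 g3.
- by rewrite f4 g4.
Qed.

Lemma alg_hom_id (F : numClosedFieldType) (A : algType F) : is_alg_hom (@id A).
Proof. by split. Qed.

Lemma H_zero (F : numClosedFieldType) (H : algType F) (K Kb L Lb : H) :
  H_rels K Kb L Lb ->
  [/\ K * Lb = 0, L * Kb = 0, Kb * L = 0 & Lb * K = 0].
Proof.
rewrite /H_rels; move=> [[k1 k2 k3] [[l1 l2 l3] PQ]].
have PP : K * Kb * (K * Kb) = K * Kb by rewrite mulrA k1.
have QQ : L * Lb * (L * Lb) = L * Lb by rewrite mulrA l1.
have PQ0 : K * Kb * (L * Lb) = 0.
  have := congr1 (fun x => K * Kb * x) PQ.
  by rewrite /= mulr1 mulrDr PP => /(congr1 (fun x => - (K * Kb) + x)); rewrite /= addNr addKr => ->.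
have QP0 : L * Lb * (K * Kb) = 0.
  have := congr1 (fun x => x * (K * Kb)) PQ.
  by rewrite /= mul1r mulrDl PP => /(congr1 (fun x => - (K * Kb) + x)); rewrite /= addNr addKr => ->.
have KP : K = K * (K * Kb) by rewrite k3 mulrA k1.
have PK : K = K * Kb * K by rewrite k1.
have KbP : Kb = Kb * (K * Kb) by rewrite mulrA k2.
have PKb : Kb = K * Kb * Kb by rewrite k3 k2.
have LQ : L = L * (L * Lb) by rewrite l3 mulrA l1.
have QL : L = L * Lb * L by rewrite l1.
have LbQ : Lb = Lb * (L * Lb) by rewrite mulrA l2.
have QLb : Lb = L * Lb * Lb by rewrite l3 l2.
split.
- by rewrite KP QLb -mulrA (mulrA (K * Kb)) PQ0 mul0r mulr0.
- by rewrite LQ PKb -mulrA (mulrA (L * Lb)) QP0 mul0r mulr0.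
- by rewrite KbP QL -mulrA (mulrA (K * Kb)) PQ0 mul0r mulr0.
- by rewrite LbQ PK -mulrA (mulrA (L * Lb)) QP0 mul0r mulr0.
Qed.

Theorem proposition1 (F : numClosedFieldType) (a b : F)
  (H0 : algType F) (k ki : H0) (H : algType F) (K Kb L Lb : H) :
  a \is Num.real -> b \is Num.real -> a != 0 -> b != 0 ->
  is_H0_presentation k ki -> is_H_presentation K Kb L Lb ->
  exists Phi : H0 -> H,
    [/\ is_alg_hom Phi,
        Phi k = a *: K + b *: L,
        Phi ki = a^-1 *: Kb + b^-1 *: Lb &
        injective Phi].
Proof.
move=> _ _ a0 b0 [[r1 r2] U0] [HR U].
have [z1 z2 z3 z4] := (@H_zero _ _ _ _ _ _ HR).
have [[_ _ k3] [[_ _ l3] PQ]] := HR.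
have rels : H0_rels (a *: K + b *: L) (a^-1 *: Kb + b^-1 *: Lb).
  split.
  - rewrite mulrDl !mulrDr -!scalerAl -!scalerAr !scalerA z1 z2 !scaler0 addr0 add0r.
    by rewrite !mulfV // !scale1r.
  - rewrite mulrDl !mulrDr -!scalerAl -!scalerAr !scalerA z3 z4 !scaler0 addr0 add0r.
    by rewrite !mulVf // !scale1r -k3 -l3.
have [[Phi [hPhi [Pk Pki]]] _] := U0 H _ _ rels.
exists Phi; split=> //.
(* left inverse *)
have relsH : H_rels k ki 0 0.
  split; first by split; rewrite ?r1 ?r2 ?mul1r.
  split; first by split; rewrite !mulr0.
  by rewrite mulr0 r1 addr0.
have [[psi [hpsi [pK [pKb [pL pLb]]]]] _] := U _ _ _ _ _ relsH.
have relsg : H0_rels (a^-1 *: k) (a *: ki).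
  by split; rewrite -scalerAl -scalerAr scalerA ?mulVf ?mulfV // scale1r ?r1 ?r2.
have [[g [hg [gk gki]]] _] := U0 H0 _ _ relsg.
have hc := @alg_hom_comp _ _ _ _ _ _ (@alg_hom_comp _ _ _ _ _ _ hPhi hpsi) hg.
have [_ uniq] := U0 H0 _ _ (conj r1 r2).
have eqid := uniq _ _ hc (@alg_hom_id _ H0).
have [_ g2 _ _] := hg.
have Hk : (g \o psi \o Phi) k = id k.
  rewrite /= Pk.
  have [p1 p2 _ _] := hpsi.
  by rewrite p1 !p2 pK pL scaler0 addr0 g2 gk scalerA mulfV // scale1r.
have Hki : (g \o psi \o Phi) ki = id ki.
  rewrite /= Pki.
  have [p1 p2 _ _] := hpsi.
  by rewrite p1 !p2 pKb pLb scaler0 addr0 g2 gki scalerA mulVf // scale1r.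
move=> x y Exy.
by rewrite -(eqid Hk Hki x) -(eqid Hk Hki y) /= Exy.
Qed.
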